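(* Let $f$, $c$, $h$, $\tilde h$ be as in the context, let $F_0$ be a probability distribution on $[\mu_{\min},\mu_{\max}]$ and let $L_{F_0}$ be the unique solution of $\int_{\mu_{\min}}^{\mu_{\max}}\mu\frac{1+\beta}{\bar\mu_{F_0}(1+L_{F_0}\tilde h(\mu))}dF_0(\mu)=\beta$. Then for any $a>0$ the function \[ U(\mu)=f\Big(\big(1+L_{F_0}\tilde h(\mu)\big)^{-1}\Big)-a\,c(\mu) \] is concave on $[\mu_{\min},\mu_{\max}]$.
   Context: $0<\mu_{\min}\le\mu_{\max}<\infty$, $\beta>0$; $\bar\mu_{F_0}$ is the mean of $F_0$. The utility-of-idleness function $f$ is concave, increasing and twice continuously differentiable; the effort cost function $c$ is convex, increasing and twice continuously differentiable. $h:[\mu_{\min},\mu_{\max}]\to\mathbb R$ satisfies $h(\mu)>0$, and $\tilde h(\mu)=h(\mu)/\mu$ is convex, strictly decreasing, twice differentiable, and satisfies $2\tilde h'(\mu)^2\le\tilde h(\mu)\tilde h''(\mu)$ for all $\mu\in[\mu_{\min},\mu_{\max}]$. *)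

(* Defs.v *)
From HB Require Import structures.
From mathcomp Require Import all_boot all_order all_algebra.
From mathcomp Require Import all_classical all_reals all_analysis.
Set Implicit Arguments. Unset Strict Implicit. Unset Printing Implicit Defensive.
Import Order.TTheory GRing.Theory Num.Theory.
Import numFieldNormedType.Exports.
Local Open Scope classical_set_scope.
Local Open Scope ring_scope.

Definition concave_on (R : realType) (I : set R) (g : R -> R) : Prop :=
  forall x y t : R, I x -> I y -> 0 <= t -> t <= 1 ->
    t * g x + (1 - t) * g y <= g (t * x + (1 - t) * y).

Definition convex_on (R : realType) (I : set R) (g : R -> R) : Prop :=
  forall x y t : R, I x -> I y -> 0 <= t -> t <= 1 ->
    g (t * x + (1 - t) * y) <= t * g x + (1 - t) * g y.

Definition increasing_on (R : realType) (I : set R) (g : R -> R) : Prop :=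
  forall x y : R, I x -> I y -> x < y -> g x < g y.

Definition strictly_decreasing_on (R : realType) (I : set R) (g : R -> R) : Prop :=
  forall x y : R, I x -> I y -> x < y -> g y < g x.

Definition C2_on (R : realType) (I : set R) (g : R -> R) : Prop :=
  forall x : R, I x ->
    [/\ derivable g x 1, derivable ((g^`())%classic) x 1 & {for x, continuous (g^`()^`())%classic}].

Definition D2_on (R : realType) (I : set R) (g : R -> R) : Prop :=
  forall x : R, I x -> derivable g x 1 /\ derivable ((g^`())%classic) x 1.

Definition mean_on (R : realType) (P : probability R R) (a b : R) : R :=
  Rintegral P `[a, b] (fun mu => mu).

Definition LF0_eq (R : realType) (P : probability R R) (a b beta : R)
    (ht : R -> R) (L : R) : Prop :=
  Rintegral P `[a, b]
    (fun mu => mu * (1 + beta) / (mean_on P a b * (1 + L * ht mu))) = beta.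

(* Main.v *)
Require Import Defs.
From HB Require Import structures.
From mathcomp Require Import all_boot all_order all_algebra.
From mathcomp Require Import all_classical all_reals all_analysis.
From mathcomp Require Import measurable_realfun.
From mathcomp Require Import ring lra.
Import Order.TTheory GRing.Theory Num.Theory.
Import numFieldNormedType.Exports.
Local Open Scope classical_set_scope.
Local Open Scope ring_scope.

Lemma L_pos (R : realType) (P : probability R R) (a b beta : R) (ht : R -> R) (L : R) :
  0 < a -> a <= b -> 0 < beta -> P (`[a,b])%classic = 1%E ->
  (forall mu, a <= mu <= b -> 0 < ht mu) ->
  {within (`[a,b])%classic, continuous ht} ->
  (forall mu, a <= mu <= b -> 0 < 1 + L * ht mu) ->
  LF0_eq P a b beta ht L -> 0 < L.
Proof.
move=> a0 ab b0 PS ht0 cht hL eqL.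
rewrite ltNge; apply/negP => L0.
set S := (`[a, b])%classic.
have mS : measurable S by exact: measurable_itv.
have PSfin : (P S < +oo)%E by rewrite PS ltry.
have mid : measurable_fun S (fun mu : R => mu) by exact: measurable_id.
have iid : P.-integrable S (EFin \o (fun mu : R => mu)).
  apply: measurable_bounded_integrable => //.
  exists `|b|; split; first exact: num_real.
  move=> M bM mu; rewrite /S /= in_itv /= => /andP[amu mub].
  idtac.
  rewrite (le_trans _ (ltW bM))// ger0_norm ?(le_trans (ltW a0))//.
  by rewrite ger0_norm// (le_trans (ltW a0))// (le_trans amu).
set m := mean_on P a b.
have ma : a <= m.
  have ca : \int[P]_(x in S) a = a.
    by rewrite Rintegral_cst// (_ : fine (P S) = 1) ?mulr1// PS.
  rewrite -[X in X <= _]ca /m /mean_on -/S.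
  apply: le_Rintegral => //.
    apply: measurable_bounded_integrable => //.
    exists `|a|; split; first exact: num_real.
    by move=> M aM mu _ /=; exact: ltW.
  by move=> mu; rewrite /S /= in_itv /= => /andP[].
have m0 : 0 < m by exact: lt_le_trans ma.
set q := fun mu => mu * (1 + beta) / (m * (1 + L * ht mu)).
have Hq : \int[P]_(x in S) q x = beta := eqL.
have W0 x : S x -> ht @ within S (nbhs x) --> ht x.
  by move=> Sx; exact: ((subspace_continuousP S ht).1 cht x Sx).
have Sin x : S x -> a <= x <= b by rewrite /S /= in_itv.
have cq : {within S, continuous q}.
  apply/subspace_continuousP => x Sx.
  have dx0 : 1 + L * ht x != 0 by rewrite gt_eqF// hL// Sin.
  rewrite /q.
  apply: cvgM.
    apply: cvgM; last exact: cvg_cst.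
    apply: cvg_within_filter. exact: cvg_id.
  apply: cvgV; first by rewrite mulf_neq0// gt_eqF.
  apply: cvgM; first exact: cvg_cst.
  apply: cvgD; first exact: cvg_cst.
  apply: cvgM; first exact: cvg_cst.
  exact: W0.
have mq : measurable_fun S q by exact: subspace_continuous_measurable_fun.
set k := (1 + beta) / m.
have k0 : 0 < k by rewrite divr_gt0// ltr_wpDr// ltW.
have qge mu : S mu -> mu * k <= q mu.
  move=> /Sin /[dup] Smu /andP[amu mub].
  have d0 := hL mu Smu.
  have d1 : 1 + L * ht mu <= 1.
    by rewrite gerDl mulr_le0_ge0// ltW// ht0.
  have mu0 : 0 <= mu * k by rewrite mulr_ge0// ltW// (lt_le_trans a0).
  have -> : q mu = (mu * k) / (1 + L * ht mu).
    by rewrite /q /k invfM !mulrA [_ / m / _]mulrAC.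
  by rewrite ler_pdivlMr// ler_piMr.
have ik : P.-integrable S (EFin \o (fun mu => mu * k)).
  by have := integrableZr mS k iid; apply: eq_integrable => //.
have intk : (\int[P]_(x in S) ((x * k)%R)%:E = (1 + beta)%:E)%E.
  have fin := integrable_fin_num mS ik.
  rewrite -(fineK fin); congr EFin.
  change (\int[P]_(x in S) (x * k) = 1 + beta).
  rewrite RintegralZr// -/(mean_on P a b) -/m /k mulrCA divff ?mulr1//.
  exact: lt0r_neq0.
have le1 : ((1 + beta)%:E <= \int[P]_(x in S) ((q x)%R)%:E)%E.
  rewrite -intk; apply: ge0_le_integral => //.
  all: try by move=> x /Sin /andP[ax _]; rewrite lee_fin mulr_ge0// ltW// (lt_le_trans a0).
  all: try by move=> x Sx; rewrite lee_fin qge.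
  all: try exact/measurable_EFinP.
  all: try by apply/measurable_EFinP; apply: measurable_funM => //; exact: measurable_cst.
move: Hq; rewrite /Rintegral.
have bb : beta < 1 + beta by rewrite ltrDr ltr01.
move: le1; case: (\int[P]_(x in S) ((q x)%R)%:E)%E => [r| |] //=.
  rewrite lee_fin => h1 h2; move: h1; rewrite h2 => h1.
  by move: (lt_le_trans bb h1); rewrite ltxx.
by move=> _ h; move: b0; rewrite -h ltxx.
Qed.

Lemma psi_concave (R : realType) (a b : R) (ht : R -> R) :
  (forall mu, a <= mu <= b -> 0 < ht mu) ->
  {within (`[a,b])%classic, continuous ht} -> D2_on (`]a,b[)%classic ht ->
  (forall mu, a < mu < b -> 2 * ((ht^`())%classic mu) ^+ 2 <= ht mu * (ht^`()^`())%classic mu) ->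
  forall x y t, a <= x -> x < y -> y <= b -> 0 <= t -> t <= 1 ->
  t * (ht x)^-1 + (1 - t) * (ht y)^-1 <= (ht (t * x + (1 - t) * y))^-1.
Proof.
move=> ht0 cht D2 hD x y t ax xy yb t0 t1.
have E1 : (ht^`())%classic = 'D_1 ht by apply/funext => z; rewrite derive1E.
have E2 : (ht^`()^`())%classic = 'D_1 ('D_1 ht).
  by apply/funext => z; rewrite derive1E E1.
rewrite E2 E1 in hD D2.
pose F := fun z => - (ht z)^-1.
have inab z : z \in `]a, b[ -> a <= z <= b.
  by rewrite in_itv /= => /andP[/ltW -> /ltW ->].
have htn0 z : z \in `]a, b[ -> ht z != 0.
  by move=> /inab /ht0 /lt0r_neq0.
have dht z : z \in `]a, b[ -> is_derive z 1 ht ('D_1 ht z).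
  by move=> zab; apply: derivableP; exact: (D2 z zab).1.
have ddht z : z \in `]a, b[ -> is_derive z 1 ('D_1 ht) ('D_1 ('D_1 ht) z).
  by move=> zab; apply: derivableP; rewrite -E1; exact: (D2 z zab).2.
pose G := fun w => (ht w ^+ 2)^-1 * 'D_1 ht w.
have dF z : z \in `]a, b[ -> is_derive z 1 F (G z).
  move=> zab.
  have h1 := is_deriveN (is_deriveV (htn0 z zab) (dht z zab)).
  apply: is_derive_eq h1 _.
  by rewrite /G scaleNr opprK.
have DF z : z \in `]a, b[ -> 'D_1 F z = G z.
  by move=> zab; exact: (@derive_val _ _ _ z 1 F (G z) (dF z zab)).
pose DDG := fun z => (ht z ^+ 2)^-1 * 'D_1 ('D_1 ht) z
  + 'D_1 ht z * (- ((ht z ^+ 2) ^- 2) * (2 * ht z * 'D_1 ht z)).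
have dG z : z \in `]a, b[ -> is_derive z 1 G (DDG z).
  move=> zab.
  have h2 := is_deriveX 2 (dht z zab).
  have h3 := is_deriveV (f := (ht ^+ 2)%R) (expf_neq0 2 (htn0 z zab)) h2.
  have h4 := is_deriveM h3 (ddht z zab).
  apply: is_derive_eq h4 _.
  by rewrite /DDG /= expr1.
have sub z : z \in `]x, y[ -> z \in `]a, b[.
  rewrite !in_itv /= => /andP[xz zy].
  by rewrite (le_lt_trans ax xz) (lt_le_trans zy yb).
have nG z : z \in `]a, b[ -> \forall w \near z, G w = 'D_1 F w.
  move=> zab; near=> w.
  have wab : w \in `]a, b[ by near: w; exact: (near_in_itvoo zab).
  exact: (esym (DF w wab)).
have dDF z : z \in `]a, b[ -> is_derive z 1 ('D_1 F) (DDG z).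
  move=> zab; exact: (near_eq_is_derive (nG z zab) (dG z zab)).
have DDGge0 z : z \in `]a, b[ -> 0 <= DDG z.
  move=> zab; have h0 : 0 < ht z by apply: ht0; exact: inab.
  have -> : DDG z = (ht z * 'D_1 ('D_1 ht) z - 2 * 'D_1 ht z ^+ 2) / ht z ^+ 3.
    rewrite /DDG; field; exact: lt0r_neq0.
  apply: divr_ge0; last exact: ltW (exprn_gt0 _ h0).
  rewrite subr_ge0; apply: hD; move: zab; rewrite in_itv //.
have cxy : {within (`[x, y])%classic, continuous ht}.
  apply: continuous_subspaceW cht => z /=; rewrite !in_itv /= => /andP[xz zy].
  by rewrite (le_trans ax xz) (le_trans zy yb).
have [_ cr cl] := (continuous_within_itvP ht xy).1 cxy.
have hx0 : ht x != 0 by apply/lt0r_neq0/ht0; rewrite ax (le_trans (ltW xy) yb).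
have hy0 : ht y != 0 by apply/lt0r_neq0/ht0; rewrite yb (le_trans ax (ltW xy)).
have cl' : F z @[z --> y^'-] --> F y by apply: cvgN; apply: cvgV.
have cr' : F z @[z --> x^'+] --> F x by apply: cvgN; apply: cvgV.
have DDF z : x < z < y -> 0 <= 'D_1 ('D_1 F) z.
  move=> zxy; have zab : z \in `]a, b[ by apply: sub; rewrite in_itv /= zxy.
  rewrite (@derive_val _ _ _ z 1 _ _ (dDF z zab)); exact: DDGge0.
have derF : {in `]x, y[, forall z, derivable F z 1}.
  by move=> z zxy; exact: (@ex_derive _ _ _ z 1 F _ (dF z (sub z zxy))).
have derDF : {in `]x, y[, forall z, derivable ('D_1 F) z 1}.
  by move=> z zxy; exact: (@ex_derive _ _ _ z 1 _ _ (dDF z (sub z zxy))).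
have key := @second_derivative_convex R F x y DDF cl' cr' derF derDF (Itv01 t0 t1) (ltW xy).
move: key; rewrite !convRE /= /unstable.onem /F !mulrN -opprD lerN2.
by [].
Unshelve. all: by end_near.
Qed.


Lemma concave_from_lt (R : realType) (a b : R) (g : R -> R) :
  (forall x y t, a <= x -> x < y -> y <= b -> 0 <= t -> t <= 1 ->
     t * g x + (1 - t) * g y <= g (t * x + (1 - t) * y)) ->
  concave_on (`[a, b])%classic g.
Proof.
move=> H x y t /=; rewrite !in_itv /= => /andP[ax xb] /andP[ay yb] t0 t1.
case: (ltgtP x y) => [xy|yx|<-].
- exact: H.
- have := H y x (1 - t) ay yx xb; rewrite subr_ge0 t1 gerBl t0 => /(_ isT isT).
  have -> : 1 - (1 - t) = t by ring.
  by rewrite addrC [X in _ <= g X]addrC.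
- have -> : t * x + (1 - t) * x = x by ring.
  by have -> : t * g x + (1 - t) * g x = g x by ring.
Qed.

Lemma comp_step (R : realType) (f : R -> R) (L hx hy hz t : R) :
  concave_on (`]0, +oo[)%classic f -> increasing_on (`]0, +oo[)%classic f ->
  0 < L -> 0 < hx -> 0 < hy -> 0 < hz -> 0 <= t -> t <= 1 ->
  t * hx^-1 + (1 - t) * hy^-1 <= hz^-1 ->
  t * f ((1 + L * hx)^-1) + (1 - t) * f ((1 + L * hy)^-1) <= f ((1 + L * hz)^-1).
Proof.
move=> fc fi L0 hx0 hy0 hz0 t0 t1 H.
have gE p : 0 < p -> (1 + L * p)^-1 = p^-1 / (p^-1 + L).
  move=> p0; have q0 : 0 < 1 + L * p by rewrite addr_gt0// mulr_gt0.
  by field; rewrite !gt_eqF ?addr_gt0 ?invr_gt0 ?mulr_gt0.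
rewrite !gE//.
set px := hx^-1; set py := hy^-1; set pz := hz^-1.
have px0 : 0 < px by rewrite invr_gt0.
have py0 : 0 < py by rewrite invr_gt0.
have pz0 : 0 < pz by rewrite invr_gt0.
set w := t * px + (1 - t) * py.
have w0 : 0 < w.
  case: (ltrP 0 t) => tp.
    have a1 : 0 < t * px by rewrite mulr_gt0.
    have a2 : 0 <= (1 - t) * py by rewrite mulr_ge0 ?subr_ge0// ltW.
    rewrite /w; lra.
  have t00 : t = 0 by apply/le_anti; rewrite tp t0.
  by rewrite /w t00 mul0r add0r subr0 mul1r.
set gx := px / (px + L); set gy := py / (py + L).
have gx0 : 0 < gx by rewrite divr_gt0// addr_gt0.
have gy0 : 0 < gy by rewrite divr_gt0// addr_gt0.
have c1 : t * gx + (1 - t) * gy <= w / (w + L).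
  have A0 : 0 < px + L by rewrite addr_gt0.
  have B0 : 0 < py + L by rewrite addr_gt0.
  have W0 : 0 < w + L by rewrite addr_gt0.
  rewrite -subr_ge0.
  have -> : w / (w + L) - (t * gx + (1 - t) * gy) =
     L * t * (1 - t) * (px - py) ^+ 2 / ((px + L) * (py + L) * (w + L)).
    rewrite /gx /gy /w; field.
    by rewrite !gt_eqF.
  apply: divr_ge0; last by rewrite ltW// !mulr_gt0.
  apply: mulr_ge0; last exact: sqr_ge0.
  apply: mulr_ge0; last by rewrite subr_ge0.
  by rewrite mulr_ge0// ltW.
have c2 : w / (w + L) <= pz / (pz + L).
  have W0 : 0 < w + L by rewrite addr_gt0.
  have Z0 : 0 < pz + L by rewrite addr_gt0.
  rewrite -subr_ge0.
  have -> : pz / (pz + L) - w / (w + L) = L * (pz - w) / ((pz + L) * (w + L)).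
    by field; rewrite !gt_eqF.
  by rewrite divr_ge0 ?mulr_ge0 ?subr_ge0 // ltW.
have g0 : 0 < t * gx + (1 - t) * gy.
  case: (ltrP 0 t) => tp.
    have a1 : 0 < t * gx by rewrite mulr_gt0.
    have a2 : 0 <= (1 - t) * gy by rewrite mulr_ge0 ?subr_ge0// ltW.
    lra.
  have -> : t = 0 by apply/le_anti; rewrite tp t0.
  by rewrite mul0r add0r subr0 mul1r.
have Igx : (`]0, +oo[)%classic gx by rewrite /= in_itv /= gx0.
have Igy : (`]0, +oo[)%classic gy by rewrite /= in_itv /= gy0.
apply: le_trans (fc gx gy t Igx Igy t0 t1) _.
have := le_trans c1 c2; rewrite le_eqVlt => /orP[/eqP ->//|lt].
apply/ltW/fi => //; rewrite /= in_itv /= ?g0 //.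
by rewrite divr_gt0// addr_gt0.
Qed.

Theorem lemma5 (R : realType) (mumin mumax beta : R)
  (f c h : R -> R) (P : probability R R) (L a : R) :
  0 < mumin -> mumin <= mumax -> 0 < beta ->
  (* f : concave, increasing, C^2 (on the idleness range ]0, +oo[) *)
  concave_on (`]0, +oo[)%classic f -> increasing_on (`]0, +oo[)%classic f -> C2_on (`]0, +oo[)%classic f ->
  (* c : convex, increasing, C^2 on [mumin, mumax] *)
  convex_on (`[mumin, mumax])%classic c -> increasing_on (`[mumin, mumax])%classic c ->
  {within (`[mumin, mumax])%classic, continuous c} -> C2_on (`]mumin, mumax[)%classic c ->
  (* h and h~ = h / mu *)
  (forall mu, mumin <= mu <= mumax -> 0 < h mu) ->
  let ht := fun mu => h mu / mu in
  convex_on (`[mumin, mumax])%classic ht -> strictly_decreasing_on (`[mumin, mumax])%classic ht ->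
  {within (`[mumin, mumax])%classic, continuous ht} -> D2_on (`]mumin, mumax[)%classic ht ->
  (forall mu, mumin < mu < mumax -> 2 * ((ht^`())%classic mu) ^+ 2 <= ht mu * (ht^`()^`())%classic mu) ->
  (* F0 is a probability distribution on [mumin, mumax] *)
  P (`[mumin, mumax])%classic = 1%E ->
  (* L = L_{F0}: the unique (admissible) solution of the defining equation *)
  (forall mu, mumin <= mu <= mumax -> 0 < 1 + L * ht mu) ->
  LF0_eq P mumin mumax beta ht L ->
  (forall L', (forall mu, mumin <= mu <= mumax -> 0 < 1 + L' * ht mu) ->
     LF0_eq P mumin mumax beta ht L' -> L' = L) ->
  0 < a ->
  concave_on (`[mumin, mumax])%classic (fun mu => f ((1 + L * ht mu)^-1) - a * c mu).
Proof.
move=> mu0 mumm b0 fc fi fC2 cc ci ccont cC2 h0 ht htc htd htcont htD2 hineq PS hL eqL uniq a0.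
have ht0 mu : mumin <= mu <= mumax -> 0 < ht mu.
  move=> Imu; move: (Imu) => /andP[m1 _].
  by rewrite /ht divr_gt0 ?h0 // (lt_le_trans mu0 m1).
have Lp := @L_pos _ P mumin mumax beta ht L mu0 mumm b0 PS ht0 htcont hL eqL.
apply: concave_from_lt => x y t ax xy yb t0 t1.
have hxyz := @psi_concave _ mumin mumax ht ht0 htcont htD2 hineq x y t ax xy yb t0 t1.
set z := t * x + (1 - t) * y.
have xz : x <= z by rewrite /z; nra.
have zy : z <= y by rewrite /z; nra.
have Ix : mumin <= x <= mumax by rewrite ax (le_trans (ltW xy) yb).
have Iy : mumin <= y <= mumax by rewrite yb (le_trans ax (ltW xy)).
have Iz : mumin <= z <= mumax by rewrite (le_trans ax xz) (le_trans zy yb).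
have comp := @comp_step _ f L _ _ _ t fc fi Lp (ht0 x Ix) (ht0 y Iy) (ht0 z Iz) t0 t1 hxyz.
have Ix' : (`[mumin, mumax])%classic x by rewrite /= in_itv /=.
have Iy' : (`[mumin, mumax])%classic y by rewrite /= in_itv /=.
have cxy := cc x y t Ix' Iy' t0 t1.
have acxy := ler_wpM2l (ltW a0) cxy.
rewrite -/z in acxy comp *.
lra.
Qed.
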